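(* Consider an instance of VCPNEW on $G=(V,E)$ with data $c,q^1,q^2$, and let MWVCP-EQV be the minimum weight vertex cover instance on $G$ with vertex weights $c'_i=c_i+\sum_{j:(i,j)\in E}(q^2_{ij}-q^1_{ij})$. For a vertex cover $P$ write $\phi(P)=\sum_{i\in P}c'_i$, let $P^o$ be an optimal vertex cover for MWVCP-EQV with $\phi(P^o)>0$, and set $\delta=\frac{\sum_{(i,j)\in E}(2q^1_{ij}-q^2_{ij})}{\phi(P^o)}$. Suppose $\sum_{(i,j)\in E}(2q^1_{ij}-q^2_{ij})\ge0$ and $c'_i\ge0$ for all $i\in V$. If $P^*$ is an $\epsilon$-approximate vertex cover for MWVCP-EQV, then $P^*$ is a $\frac{\epsilon+\delta}{1+\delta}$-approximate vertex cover for VCPNEW.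
   Context: A vertex cover of $G$ is a set $P\subseteq V$ containing at least one endpoint of every edge. For $P\subseteq V$, $E_1(P)$ is the set of edges with exactly one endpoint in $P$ and $E_2(P)$ the set of edges with both endpoints in $P$. VCPNEW is to find a vertex cover $P$ minimizing $f(P)=\sum_{i\in P}c_i+\sum_{(i,j)\in E_1(P)}q^1_{ij}+\sum_{(i,j)\in E_2(P)}q^2_{ij}$. A feasible solution $P^*$ of a minimization problem with optimal value $OPT$ is $\epsilon$-approximate if its objective value is at most $\epsilon\cdot OPT$. *)

(* Defs.v *)
From mathcomp Require Import all_boot all_order all_algebra.
Set Implicit Arguments. Unset Strict Implicit. Unset Printing Implicit Defensive.
Import Order.TTheory GRing.Theory Num.Theory.
Local Open Scope ring_scope.

Definition simple_graph (V : finType) (E : {set {set V}}) : Prop :=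
  forall e, e \in E -> #|e| = 2%N.

Definition vertex_cover (V : finType) (E : {set {set V}}) (P : {set V}) : bool :=
  [forall e in E, e :&: P != set0].

Definition E1 (V : finType) (E : {set {set V}}) (P : {set V}) : {set {set V}} :=
  [set e in E | #|e :&: P| == 1%N].
Definition E2 (V : finType) (E : {set {set V}}) (P : {set V}) : {set {set V}} :=
  [set e in E | e \subset P].

Definition fVCP (R : numDomainType) (V : finType) (E : {set {set V}})
  (c : V -> R) (q1 q2 : {set V} -> R) (P : {set V}) : R :=
  \sum_(i in P) c i + \sum_(e in E1 E P) q1 e + \sum_(e in E2 E P) q2 e.

Definition cprime (R : numDomainType) (V : finType) (E : {set {set V}})
  (c : V -> R) (q1 q2 : {set V} -> R) (i : V) : R :=
  c i + \sum_(e in E | i \in e) (q2 e - q1 e).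

Definition phi (R : numDomainType) (V : finType) (w : V -> R) (P : {set V}) : R :=
  \sum_(i in P) w i.

Definition is_opt_value (R : numDomainType) (V : finType)
  (feas : {set V} -> bool) (obj : {set V} -> R) (opt : R) : Prop :=
  (exists2 Q, feas Q & obj Q = opt) /\ (forall Q, feas Q -> opt <= obj Q).

Definition approx (R : numDomainType) (V : finType)
  (feas : {set V} -> bool) (obj : {set V} -> R) (eps : R) (P : {set V}) : Prop :=
  feas P /\ (forall opt, is_opt_value feas obj opt -> obj P <= eps * opt).

(* Main.v *)
Require Import Defs.
From mathcomp Require Import all_boot all_order all_algebra.
From mathcomp Require Import ring lra.
Import Order.TTheory GRing.Theory Num.Theory.
Local Open Scope ring_scope.

Lemma card_edge (V : finType) (E : {set {set V}}) (P : {set V}) e :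
  simple_graph E -> vertex_cover E P -> e \in E ->
  (#|e :&: P| = 1%N /\ ~~ (e \subset P)) \/ (#|e :&: P| = 2%N /\ e \subset P).
Proof.
move=> sg vc eE.
have he := sg e eE.
have /forall_inP/(_ e eE) := vc => ne0.
have pos : (0 < #|e :&: P|)%N by rewrite card_gt0.
have := subset_leqif_card (subsetIl e P).
rewrite subsetI subxx /= he => -[le2 eqb].
case: (boolP (e \subset P)) => sub.
  by right; split=> //; apply/eqP; rewrite eqb.
left; split=> //.
move: eqb; rewrite (negbTE sub) => /negbT ne2.
move: le2 ne2 pos; case: #|_| => [|[|[|n]]] //.
Qed.

Lemma key (R : realFieldType) (V : finType) (E : {set {set V}})
  (c : V -> R) (q1 q2 : {set V} -> R) P :
  simple_graph E -> vertex_cover E P ->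
  fVCP E c q1 q2 P = phi (cprime E c q1 q2) P + \sum_(e in E) (2 * q1 e - q2 e).
Proof.
move=> sg vc.
rewrite /fVCP /phi /cprime big_split /= -!addrA; congr (_ + _).
have ex : \sum_(i in P) \sum_(e in E | i \in e) (q2 e - q1 e)
   = \sum_(e in E) ((q2 e - q1 e) *+ #|e :&: P|).
  under eq_bigr => i _ do rewrite big_mkcondr /=.
  rewrite exchange_big /=; apply: eq_bigr => e _.
  rewrite -big_mkcondr /= -sumr_const; apply: eq_bigl => i.
  by rewrite in_setI andbC.
rewrite ex -big_split /=.
rewrite /E1 /E2.
have -> : \sum_(e in [set e in E | #|e :&: P| == 1%N]) q1 e
   = \sum_(e in E | #|e :&: P| == 1%N) q1 e by apply: eq_bigl => e; rewrite inE.
have -> : \sum_(e in [set e in E | e \subset P]) q2 e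
   = \sum_(e in E | e \subset P) q2 e by apply: eq_bigl => e; rewrite inE.
rewrite !big_mkcondr /= -big_split /=; apply: eq_bigr => e eE.
case: (@card_edge _ _ _ e sg vc eE) => -[-> s]; rewrite ?(negbTE s) ?s /=.
  by rewrite mulr1n addr0; ring.
by rewrite add0r mulr2n; ring.
Qed.

Theorem lemma4 (R : realFieldType) (V : finType) (E : {set {set V}})
  (c : V -> R) (q1 q2 : {set V} -> R) (Po Pstar : {set V}) (eps : R) :
  simple_graph E ->
  (* Po is an optimal vertex cover for MWVCP-EQV with phi(Po) > 0 *)
  vertex_cover E Po ->
  (forall Q, vertex_cover E Q ->
     phi (cprime E c q1 q2) Po <= phi (cprime E c q1 q2) Q) ->
  0 < phi (cprime E c q1 q2) Po ->
  0 <= \sum_(e in E) (2 * q1 e - q2 e) ->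
  (forall i, 0 <= cprime E c q1 q2 i) ->
  approx (vertex_cover E) (phi (cprime E c q1 q2)) eps Pstar ->
  let delta := (\sum_(e in E) (2 * q1 e - q2 e)) / phi (cprime E c q1 q2) Po in
  approx (vertex_cover E) (fVCP E c q1 q2) ((eps + delta) / (1 + delta)) Pstar.
Proof.
move=> sg vcPo optPo pos S0 _ [vcS apS] delta.
split=> // opt [[Q vcQ <-] optle].
have hPo := optPo Q vcQ.
have le1 := optle Po vcPo.
rewrite !key // in le1 *.
set S := \sum_(e in E) _ in S0 le1 delta *.
set F := phi _ Po in pos hPo le1 delta *.
have hopt : phi (cprime E c q1 q2) Q = F.
  by apply: le_anti; rewrite hPo andbT -(lerD2r S).
have := apS F (conj (ex_intro2 _ _ Po vcPo erefl) optPo) => hS.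
rewrite hopt /delta.
have Fn : F != 0 by rewrite gt_eqF.
have e1 : (eps + S / F) / (1 + S / F) * (F + S) = eps * F + S.
  have : F + S != 0 by rewrite gt_eqF // ltr_wpDr.
  move=> h; field; rewrite Fn /=.
  exact: h.
by rewrite e1 lerD2r.
Qed.
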